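(* Let $k\ge6$, $0<\theta<\frac{k^2-6k+1}{(k+1)^2}$, and let $$s^\pm=\frac{k-3-(k+1)\theta\pm\sqrt{(1-\theta)[k^2-6k+1-(k+1)^2\theta]}}{4(1+\theta)},\qquad \lambda^\pm=s^\pm\Bigl(\frac{1+2s^\pm}{1+(1+\theta)s^\pm}\Bigr)^k.$$ If $\lambda\in(\lambda^-,\lambda^+)$, then with $\phi(x)=\lambda\bigl(\frac{1+(1+\theta)x}{1+2x}\bigr)^k$ the system $z=\phi(t)$, $t=\phi(z)$ has at least three solutions in $(0,\infty)^2$, namely $(x_*,x_* )$, $(x_0,x_1)$, $(x_1,x_0)$ with $x_0\ne x_1$, where $x_*$ is the unique positive fixed point of $\phi$. Consequently there are at least three 2-periodic splitting Gibbs measures of the SCWR model.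
   Context: SCWR model on the Cayley tree of order $k$, spins $\{-1,0,1\}$, activity $\lambda>0$, $\theta=e^{-J\beta}\in(0,1)$. Splitting Gibbs measures correspond to positive solutions $(z_{1,i},z_{2,i})_{i}$ of $z_{1,i}=\lambda\prod_{j\in S(i)}\frac{1+z_{1,j}+\theta z_{2,j}}{1+z_{1,j}+z_{2,j}}$, $z_{2,i}=\lambda\prod_{j\in S(i)}\frac{1+z_{2,j}+\theta z_{1,j}}{1+z_{1,j}+z_{2,j}}$ ($S(i)$ the $k$ direct successors of $i$). A 2-periodic splitting Gibbs measure is one whose solution takes a value $(z_1,z_2)$ on all vertices at even distance from the root and a value $(t_1,t_2)$ on all vertices at odd distance; the solutions considered here have $z_1=z_2=z$ and $t_1=t_2=t$, in which case the equations reduce to $z=\phi(t)$, $t=\phi(z)$. *)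

(* Defs.v *)
From Stdlib Require Import Reals.
Open Scope R_scope.

Definition phi (k : nat) (theta lambda x : R) : R :=
  lambda * ((1 + (1 + theta) * x) / (1 + 2 * x)) ^ k.

Definition s_pm (k : nat) (theta sign : R) : R :=
  (INR k - 3 - (INR k + 1) * theta
     + sign * sqrt ((1 - theta) * (INR k ^ 2 - 6 * INR k + 1 - (INR k + 1) ^ 2 * theta)))
  / (4 * (1 + theta)).

Definition lambda_pm (k : nat) (theta sign : R) : R :=
  let s := s_pm k theta sign in
  s * ((1 + 2 * s) / (1 + (1 + theta) * s)) ^ k.

(* 2-periodic solution of the SCWR splitting-Gibbs-measure equations on the
   Cayley tree of order k: value (z1,z2) at even distance, (t1,t2) at odd
   distance; each vertex has k successors at the other parity. *)
Definition scwr_2periodic (k : nat) (theta lambda z1 z2 t1 t2 : R) : Prop :=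
  0 < z1 /\ 0 < z2 /\ 0 < t1 /\ 0 < t2 /\
  z1 = lambda * ((1 + t1 + theta * t2) / (1 + t1 + t2)) ^ k /\
  z2 = lambda * ((1 + t2 + theta * t1) / (1 + t1 + t2)) ^ k /\
  t1 = lambda * ((1 + z1 + theta * z2) / (1 + z1 + z2)) ^ k /\
  t2 = lambda * ((1 + z2 + theta * z1) / (1 + z1 + z2)) ^ k.

(* Main.v *)
Require Import Defs.
From Stdlib Require Import Reals Lra Lia Ranalysis5.
From Coquelicot Require Import Coquelicot.
Open Scope R_scope.

Definition rr (t x : R) := (1 + (1 + t) * x) / (1 + 2 * x).
Definition dphi k t l x := l * (INR k * rr t x ^ pred k * ((t - 1) / (1 + 2 * x) ^ 2)).

Lemma phi_der k t l x : 1 + 2 * x <> 0 -> is_derive (phi k t l) x (dphi k t l x).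
Proof.
  intros H. unfold phi, dphi, rr. auto_derive; [auto|]. unfold Rdiv. set (P := ((1 + (1 + t) * x) * / (1 + 2 * x)) ^ Init.Nat.pred k). field. auto.
Qed.

Lemma h_der k t l x : 0 <= x -> 0 < t -> 0 < l ->
  is_derive (fun y => phi k t l (phi k t l y) - y) x (dphi k t l x * dphi k t l (phi k t l x) - 1).
Proof.
  intros Hx Ht Hl.
  assert (Hp : 0 < phi k t l x).
  { unfold phi. apply Rmult_lt_0_compat; auto. apply pow_lt. unfold Rdiv.
    apply Rmult_lt_0_compat; [nra| apply Rinv_0_lt_compat; lra]. }
  assert (H1 := is_derive_comp (phi k t l) (phi k t l) x _ _ (phi_der k t l (phi k t l x) ltac:(lra)) (phi_der k t l x ltac:(lra))).
  assert (H2 := is_derive_minus _ _ x _ _ H1 (is_derive_id x)).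
  exact H2.
Qed.

Lemma der_cont f x d : is_derive f x d -> continuity_pt f x.
Proof. intros H. apply derivable_continuous_pt. exists d. apply is_derive_Reals. exact H. Qed.

Lemma pow_lt_strict a b n : 0 <= a < b -> (0 < n)%nat -> a ^ n < b ^ n.
Proof.
  intros Hab Hn. destruct n as [|n]; [lia|]. clear Hn.
  induction n as [|n IH]; [simpl; lra|].
  change (a * a ^ S n < b * b ^ S n). assert (0 <= a ^ S n) by (apply pow_le; lra). nra.
Qed.

Lemma rr_pos t x : 0 < t -> 0 <= x -> 0 < rr t x.
Proof. intros. unfold rr, Rdiv. apply Rmult_lt_0_compat; [nra| apply Rinv_0_lt_compat; lra]. Qed.

Lemma rr_lt1 t x : t < 1 -> 0 < x -> rr t x < 1.
Proof. intros. unfold rr. apply (Rmult_lt_reg_r (1 + 2*x)); [lra|].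
  unfold Rdiv. rewrite Rmult_assoc, Rinv_l; nra. Qed.

Lemma rr_dec t a b : t < 1 -> 0 <= a < b -> rr t b < rr t a.
Proof. intros. unfold rr.
  apply Rminus_gt_0_lt. replace ((1 + (1 + t) * a) / (1 + 2 * a) - (1 + (1 + t) * b) / (1 + 2 * b))
   with ((1 - t) * (b - a) / ((1 + 2*a) * (1 + 2*b))) by (field; lra).
  unfold Rdiv. apply Rmult_lt_0_compat; [nra| apply Rinv_0_lt_compat; nra]. Qed.

Lemma phi_pos k t l x : 0 < l -> 0 < t -> 0 <= x -> 0 < phi k t l x.
Proof. intros. unfold phi. apply Rmult_lt_0_compat; auto. apply pow_lt. apply (rr_pos t x); auto. Qed.

Lemma phi_lt k t l x : (1 <= k)%nat -> 0 < l -> 0 < t < 1 -> 0 < x -> phi k t l x < l.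
Proof. intros. unfold phi.
  assert (((1 + (1 + t) * x) / (1 + 2 * x)) ^ k < 1 ^ k).
  { apply pow_lt_strict; [|lia]. split; [left; apply (rr_pos t x); lra| apply (rr_lt1 t x); lra]. }
  rewrite pow1 in H3. nra. Qed.

Lemma phi_dec k t l a b : (1 <= k)%nat -> 0 < l -> 0 < t < 1 -> 0 <= a < b -> phi k t l b < phi k t l a.
Proof. intros. unfold phi. apply Rmult_lt_compat_l; auto. apply pow_lt_strict; [|lia].
  split; [left; apply (rr_pos t b); lra| apply (rr_dec t a b); lra]. Qed.

Definition LL k t x := x * ((1 + 2 * x) / (1 + (1 + t) * x)) ^ k.

Lemma LL_incr k t a b : 0 < t < 1 -> 0 < a < b -> LL k t a < LL k t b.
Proof. intros. unfold LL.
  set (qa := (1 + 2 * a) / (1 + (1 + t) * a)). set (qb := (1 + 2 * b) / (1 + (1 + t) * b)).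
  assert (0 < qa) by (unfold qa, Rdiv; apply Rmult_lt_0_compat; [nra| apply Rinv_0_lt_compat; nra]).
  assert (0 < 1 + (1+t)*a) by nra. assert (0 < 1 + (1+t)*b) by nra.
  assert (qa <= qb).
  { unfold qa, qb. apply Rminus_le. replace ((1 + 2 * a) / (1 + (1 + t) * a) - (1 + 2 * b) / (1 + (1 + t) * b))
   with (- ((1 - t) * (b - a) / ((1 + (1+t)*a) * (1 + (1+t)*b)))) by (field; lra).
   unfold Rdiv. assert (0 < (1 - t) * (b - a) * / ((1 + (1 + t) * a) * (1 + (1 + t) * b))); [|lra].
   apply Rmult_lt_0_compat; [nra| apply Rinv_0_lt_compat; nra]. }
  assert (0 < qa ^ k) by (apply pow_lt; auto).
  assert (qa ^ k <= qb ^ k) by (apply pow_incr; lra). nra. Qed.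

Lemma scwr_of k t l z w : 0 < z -> 0 < w -> z = phi k t l w -> w = phi k t l z ->
  scwr_2periodic k t l z z w w.
Proof. intros H1 H2 H3 H4. unfold phi in *. unfold scwr_2periodic.
  replace (1 + w + t * w) with (1 + (1 + t) * w) by ring. replace (1 + w + w) with (1 + 2 * w) by ring.
  replace (1 + z + t * z) with (1 + (1 + t) * z) by ring. replace (1 + z + z) with (1 + 2 * z) by ring.
  unfold scwr_2periodic. tauto. Qed.

Theorem mainTheorem18 (k : nat) (theta lambda : R) :
  (6 <= k)%nat ->
  0 < theta ->
  theta < (INR k ^ 2 - 6 * INR k + 1) / (INR k + 1) ^ 2 ->
  lambda_pm k theta (-1) < lambda ->
  lambda < lambda_pm k theta 1 ->
  exists xs x0 x1 : R,
    (0 < xs /\ phi k theta lambda xs = xs /\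
     forall y, 0 < y -> phi k theta lambda y = y -> y = xs) /\
    0 < x0 /\ 0 < x1 /\ x0 <> x1 /\
    x0 = phi k theta lambda x1 /\ x1 = phi k theta lambda x0 /\
    scwr_2periodic k theta lambda xs xs xs xs /\
    scwr_2periodic k theta lambda x0 x0 x1 x1 /\
    scwr_2periodic k theta lambda x1 x1 x0 x0.
Proof.
  intros Hk Ht Htb Hlm Hlp.
  set (K := INR k).
  assert (HK : 6 <= K).
  { unfold K. replace 6 with (INR 6) by (simpl; ring). apply le_INR; auto. }
  assert (Hk1 : (1 <= k)%nat) by lia.
  assert (HQ0 : theta * (K + 1) ^ 2 < K ^ 2 - 6 * K + 1).
  { apply (Rmult_lt_compat_r ((K + 1) ^ 2)) in Htb; [|nra].
    assert ((K + 1) ^ 2 <> 0) by (apply pow_nonzero; lra).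
    unfold Rdiv in Htb. rewrite Rmult_assoc, Rinv_l in Htb; auto. unfold K in *; lra. }
  assert (Ht1 : theta < 1).
  { destruct (Rlt_or_le theta 1) as [H|H]; auto.
    assert (1 * (K + 1) ^ 2 <= theta * (K + 1) ^ 2) by (apply Rmult_le_compat_r; [apply pow_le; lra| lra]).
    simpl in *. nra. }
  set (A := K - 3 - (K + 1) * theta).
  set (Q := (1 - theta) * (K ^ 2 - 6 * K + 1 - (K + 1) ^ 2 * theta)).
  assert (HQ : 0 < Q) by (unfold Q; nra).
  set (S := sqrt Q).
  assert (HSS : S * S = Q) by (apply sqrt_sqrt; lra).
  assert (HS : 0 < S) by (apply sqrt_lt_R0; auto).
  assert (HA : 0 < A) by (unfold A; nra).
  assert (HAQ : A * A - Q = 8 * (1 + theta)) by (unfold A, Q; ring).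
  assert (HAS : S < A) by nra.
  set (B := 4 * (1 + theta)).
  assert (HB : 0 < B) by (unfold B; lra).
  assert (Esm : s_pm k theta (-1) = (A - S) / B) by (unfold s_pm, A, S, Q, B, K; field; lra).
  assert (Esp : s_pm k theta 1 = (A + S) / B) by (unfold s_pm, A, S, Q, B, K; field; lra).
  set (sm := (A - S) / B). set (sp := (A + S) / B).
  assert (Hsm : 0 < sm) by (unfold sm, Rdiv; apply Rmult_lt_0_compat; [lra| apply Rinv_0_lt_compat; lra]).
  assert (Hsp : sm < sp) by (unfold sm, sp, Rdiv; apply Rmult_lt_compat_r; [apply Rinv_0_lt_compat; lra| lra]).
  assert (ELm : lambda_pm k theta (-1) = LL k theta sm) by (unfold lambda_pm; cbv zeta; rewrite Esm; reflexivity).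
  assert (ELp : lambda_pm k theta 1 = LL k theta sp) by (unfold lambda_pm; cbv zeta; rewrite Esp; reflexivity).
  rewrite ELm in Hlm. rewrite ELp in Hlp.
  assert (HLsm : 0 < LL k theta sm).
  { unfold LL. apply Rmult_lt_0_compat; auto. apply pow_lt. unfold Rdiv.
    apply Rmult_lt_0_compat; [lra| apply Rinv_0_lt_compat; nra]. }
  assert (Hl : 0 < lambda) by lra.
  set (f := phi k theta lambda).
  assert (Hfc : forall a, 0 <= a -> continuity_pt f a).
  { intros a Ha. apply (der_cont _ _ _ (phi_der k theta lambda a ltac:(lra))). }
  destruct (IVT_interv (fun x => x - f x) 0 lambda) as [xs [Hxs1 Hxs2]].
  { intros a Ha. apply continuity_pt_minus; [apply derivable_continuous_pt, derivable_pt_id| apply Hfc; lra]. }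
  { auto. }
  { assert (0 < f 0) by (apply phi_pos; lra). lra. }
  { assert (f lambda < lambda) by (apply phi_lt; auto). lra. }
  assert (Hfxs : f xs = xs) by lra.
  assert (Hxs : 0 < xs) by (rewrite <- Hfxs; apply phi_pos; lra).
  assert (Huniq : forall y, 0 < y -> f y = y -> y = xs).
  { intros y Hy Hfy. destruct (Rtotal_order y xs) as [H|[H|H]]; auto.
    - assert (f xs < f y) by (apply phi_dec; auto; lra). lra.
    - assert (f y < f xs) by (apply phi_dec; auto; lra). lra. }
  assert (HLxs : LL k theta xs = lambda).
  { unfold LL. rewrite <- Hfxs at 1. unfold f, phi. rewrite Rmult_assoc, <- Rpow_mult_distr.
    replace ((1 + (1 + theta) * xs) / (1 + 2 * xs) * ((1 + 2 * xs) / (1 + (1 + theta) * xs))) with 1.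
    - rewrite pow1; ring.
    - field. split; nra. }
  assert (Hxm : sm < xs).
  { destruct (Rle_or_lt xs sm) as [H|H]; auto.
    destruct H as [H|H].
    - assert (LL k theta xs < LL k theta sm) by (apply LL_incr; auto; lra). lra.
    - subst. lra. }
  assert (Hxp : xs < sp).
  { destruct (Rle_or_lt sp xs) as [H|H]; auto.
    destruct H as [H|H].
    - assert (LL k theta sp < LL k theta xs) by (apply LL_incr; auto; lra). lra.
    - rewrite H in Hlp. lra. }
  assert (Hq1 : A - S < B * xs).
  { unfold sm in Hxm. apply (Rmult_lt_compat_l B) in Hxm; auto.
    unfold Rdiv in Hxm. rewrite (Rmult_comm (A - S)), <- Rmult_assoc, Rinv_r in Hxm; lra. }
  assert (Hq2 : B * xs < A + S).
  { unfold sp in Hxp. apply (Rmult_lt_compat_l B) in Hxp; auto.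
    unfold Rdiv in Hxp. rewrite (Rmult_comm (A + S)), <- Rmult_assoc, Rinv_r in Hxp; lra. }
  assert (Hq3 : (B * xs - A) * (B * xs - A) < Q) by nra.
  assert (Hq4 : 2 * (1 + theta) * xs * xs - A * xs + 1 < 0).
  { assert (8 * (1 + theta) * (2 * (1 + theta) * xs * xs - A * xs + 1) < 0); [|nra].
    replace (8 * (1 + theta) * (2 * (1 + theta) * xs * xs - A * xs + 1))
      with ((B * xs - A) * (B * xs - A) - A * A + 8 * (1 + theta)) by (unfold B; ring).
    lra. }
  assert (HP1 : 0 < 1 + 2 * xs) by lra.
  assert (HP2 : 0 < 1 + (1 + theta) * xs) by nra.
  set (D := K * xs * (1 - theta) / ((1 + 2 * xs) * (1 + (1 + theta) * xs))).
  assert (HD : 1 < D).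
  { unfold D. apply (Rmult_lt_reg_r ((1 + 2 * xs) * (1 + (1 + theta) * xs))); [nra|].
    unfold Rdiv. rewrite Rmult_assoc, Rinv_l; [|nra]. unfold A in Hq4. nra. }
  assert (Hdphi : dphi k theta lambda xs = - D).
  { destruct k as [|m]; [lia|].
    unfold dphi, D, K. simpl pred.
    assert (Hfx := Hfxs). unfold f, phi in Hfx. simpl in Hfx. fold (rr theta xs) in Hfx.
    assert (Hr : 0 < rr theta xs) by (apply rr_pos; lra).
    assert (E : lambda * rr theta xs ^ m = xs / rr theta xs).
    { revert Hfx Hr. generalize (rr theta xs ^ m) (rr theta xs). intros P r Hfx Hr.
      rewrite <- Hfx. field. lra. }
    replace (lambda * (INR (Datatypes.S m) * rr theta xs ^ m * ((theta - 1) / (1 + 2 * xs) ^ 2)))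
      with (INR (Datatypes.S m) * (lambda * rr theta xs ^ m) * ((theta - 1) / (1 + 2 * xs) ^ 2)) by ring.
    rewrite E. unfold rr. field. split; lra. }
  set (h := fun y => f (f y) - y).
  assert (Hh0 : h xs = 0) by (unfold h; rewrite !Hfxs; ring).
  assert (Hhd : derivable_pt_lim h xs (D * D - 1)).
  { apply is_derive_Reals.
    replace (D * D - 1) with (dphi k theta lambda xs * dphi k theta lambda (phi k theta lambda xs) - 1).
    - apply h_der; lra.
    - fold f. rewrite Hfxs, Hdphi. ring. }
  destruct (Hhd (D * D - 1) ltac:(nra)) as [delta Hdel].
  set (e := Rmin (delta / 2) ((lambda - xs) / 2)).
  assert (Hxl : xs < lambda) by (rewrite <- Hfxs at 1; apply phi_lt; auto; lra).
  assert (He0 : 0 < e) by (unfold e; apply Rmin_glb_lt; [destruct delta; simpl; lra| lra]).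
  assert (He1 : e < delta) by (unfold e; destruct delta as [d Hd]; simpl; assert (Rmin (d/2) ((lambda - xs)/2) <= d/2) by apply Rmin_l; lra).
  assert (He2 : e < lambda - xs) by (unfold e; assert (Rmin (delta/2) ((lambda - xs)/2) <= (lambda - xs)/2) by apply Rmin_r; lra).
  assert (Hhe : 0 < h (xs + e)).
  { assert (H := Hdel e ltac:(lra) ltac:(rewrite Rabs_right; lra)).
    rewrite Hh0, Rminus_0_r in H. apply Rabs_def2 in H. destruct H as [_ H].
    assert (0 < h (xs + e) / e) by lra.
    replace (h (xs + e)) with (h (xs + e) / e * e) by (field; lra). nra. }
  assert (Hhl : h lambda < 0).
  { unfold h. assert (f (f lambda) < lambda); [|lra].
    apply phi_lt; auto. apply phi_pos; lra. }
  destruct (IVT_interv (fun x => - h x) (xs + e) lambda) as [z [Hz1 Hz2]].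
  { intros a Ha. apply (der_cont _ _ (- (dphi k theta lambda a * dphi k theta lambda (phi k theta lambda a) - 1))).
    apply (is_derive_opp h). apply h_der; lra. }
  { lra. }
  { lra. }
  { lra. }
  assert (Hhz : f (f z) = z) by (unfold h in Hz2; lra).
  assert (Hz : 0 < z) by lra.
  assert (Hfz : 0 < f z) by (apply phi_pos; lra).
  exists xs, z, (f z).
  assert (Hne : z <> f z).
  { intros E. assert (z = xs) by (apply Huniq; auto). lra. }
  split; [split; [auto| split; auto]|].
  split; [auto|]. split; [auto|]. split; [auto|]. split; [symmetry; auto|]. split; [auto|].
  split; [apply scwr_of; auto|]. split; apply scwr_of; auto.
Qed.
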